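(* Let $k\in\mathbb{N}$ with $k\ge2$, let $t_0\ge0$, and let $g_0\in C^2([t_0,\infty))$ satisfy $$\lim_{t\to\infty}tg_0'(t)=\infty,\qquad \lim_{t\to\infty}\frac{g_0''(t)}{g_0'(t)^2}=0,$$ and suppose $tg_0'(t)$ is nondecreasing and $g_0'(t)/g_0(t)$ is nonincreasing for all $t\ge t_0$. Let $f:[0,\infty)\to[0,\infty)$ be continuously differentiable with $f(t)=\exp_k(g_0(t))$ for all large $t$. Then $f$ satisfies condition (H1) of the context with $q=1$ (with $t_0$ replaced by a suitably large number).
   Context: $\exp_1=\exp$ and $\exp_k(t)=\exp_{k-1}(\exp(t))$. For $f$ positive and $C^2$ on $[t_0,\infty)$ with $g=\log f$ there, condition (H1) means: (i) $g'(t)>0$ and $g''(t)>0$ for all $t\ge t_0$, and there is a pair $(q,p)$ with either $q=1$ and $p\in(0,\infty]$, or $q\in(1,\infty)$ and $p\in(0,\infty)$, such that $\lim_{t\to\infty}\frac{g'(t)^2}{g(t)g''(t)}=q$ and $\lim_{t\to\infty}\frac{tg'(t)}{g(t)}=p$; (ii) if $q=1$, then $tg'(t)/g(t)$ is nondecreasing on $[t_0,\infty)$ and there exist $m\in\mathbb{N}$ and $\hat g\in C^2([t_0,\infty))$ with $f=\exp_m\circ\hat g$ and $\hat g'/\hat g$ nonincreasing on $[t_0,\infty)$. *)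

(* Defs.v *)
From Stdlib Require Import Reals.
From Coquelicot Require Import Coquelicot.
Open Scope R_scope.

Fixpoint exp_iter (k : nat) (t : R) : R :=
  match k with
  | O => t
  | S k' => exp_iter k' (exp t)
  end.

Definition deriv_on (a : R) (h h' : R -> R) : Prop :=
  forall t, a <= t ->
    filterlim (fun s => (h s - h t) / (s - t))
      (within (fun s => a <= s /\ s <> t) (locally t)) (locally (h' t)).

Definition cont_on (a : R) (h : R -> R) : Prop :=
  forall t, a <= t ->
    filterlim h (within (fun s => a <= s) (locally t)) (locally (h t)).

Definition C2_with (a : R) (h h1 h2 : R -> R) : Prop :=
  deriv_on a h h1 /\ deriv_on a h1 h2 /\ cont_on a h2.

Definition C2_on (a : R) (h : R -> R) : Prop :=
  exists h1 h2, C2_with a h h1 h2.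

Definition C1_on (a : R) (h : R -> R) : Prop :=
  exists h1, deriv_on a h h1 /\ cont_on a h1.

Definition nondecr_on (a : R) (h : R -> R) : Prop :=
  forall s t, a <= s -> s <= t -> h s <= h t.

Definition nonincr_on (a : R) (h : R -> R) : Prop :=
  forall s t, a <= s -> s <= t -> h t <= h s.

Definition H1 (f : R -> R) (t0 : R) (q : R) (p : Rbar) : Prop :=
  (forall t, t0 <= t -> 0 < f t) /\ C2_on t0 f /\
  exists g1 g2 : R -> R,
    C2_with t0 (fun t => ln (f t)) g1 g2 /\
    (forall t, t0 <= t -> 0 < g1 t /\ 0 < g2 t) /\
    ((q = 1 /\ Rbar_lt 0 p) \/ (1 < q /\ is_finite p /\ Rbar_lt 0 p)) /\
    is_lim (fun t => (g1 t) ^ 2 / (ln (f t) * g2 t)) p_infty q /\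
    is_lim (fun t => t * g1 t / ln (f t)) p_infty p /\
    (q = 1 ->
       nondecr_on t0 (fun t => t * g1 t / ln (f t)) /\
       exists (m : nat) (gh gh1 gh2 : R -> R),
         (1 <= m)%nat /\ C2_with t0 gh gh1 gh2 /\
         (forall t, t0 <= t -> f t = exp_iter m (gh t)) /\
         nonincr_on t0 (fun t => gh1 t / gh t)).

(* Main.v *)
Require Import Defs.
From Stdlib Require Import Reals Lra Lia.
From Coquelicot Require Import Coquelicot.
Open Scope R_scope.

Lemma ballR x e y : ball x e y <-> Rabs (y - x) < e. Proof. reflexivity. Qed.

Lemma deriv_on_of a h U h' :
  (forall t, a <= t -> h t = U t) ->
  (forall t, a <= t -> derivable_pt_lim U t (h' t)) -> deriv_on a h h'.
Proof.
intros He Hd t Ht. apply filterlim_locally. intros eps.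
destruct (Hd t Ht eps (cond_pos eps)) as [d Hdd].
exists d. cut (forall s : R, ball t d s -> (a <= s /\ s <> t) -> ball (h' t) eps ((h s - h t)/(s - t))).
{ intro H; exact H. }
intros s Hs [Has Hst]. apply ballR. apply ballR in Hs.
assert (Hne : s - t <> 0) by lra.
specialize (Hdd (s - t) Hne Hs).
replace (t + (s - t)) with s in Hdd by ring.
rewrite (He s Has), (He t Ht). exact Hdd.
Qed.

Lemma dpl_of_deriv_on a h h' t : deriv_on a h h' -> a < t -> derivable_pt_lim h t (h' t).
Proof.
intros Hd Ht eps Heps.
specialize (Hd t (Rlt_le _ _ Ht)). pose proof (proj1 (filterlim_locally _ _) Hd) as Hd0; clear Hd; rename Hd0 into Hd.
destruct (Hd (mkposreal eps Heps)) as [d Hdd].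
assert (Hp : 0 < Rmin d (t - a)) by (apply Rmin_pos; [apply cond_pos|lra]).
exists (mkposreal _ Hp). intros hh Hh0 Hh. simpl in Hh.
assert (H1 : Rabs hh < d) by (eapply Rlt_le_trans; [exact Hh| apply Rmin_l]).
assert (H2 : Rabs hh < t - a) by (eapply Rlt_le_trans; [exact Hh| apply Rmin_r]).
assert (Hb : ball t d (t + hh)) by (apply ballR; replace (t + hh - t) with hh by ring; exact H1).
assert (Ha : a <= t + hh /\ t + hh <> t).
{ split. destruct (Rabs_def2 _ _ H2); lra. intro; apply Hh0; lra. }
specialize (Hdd _ Hb Ha). apply ballR in Hdd. simpl in Hdd.
replace (t + hh - t) with hh in Hdd by ring. exact Hdd.
Qed.

Lemma cont_on_of a h U :
  (forall t, a <= t -> h t = U t) ->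
  (forall t, a <= t -> continuity_pt U t) -> cont_on a h.
Proof.
intros He Hc t Ht. apply filterlim_locally. intros eps.
specialize (Hc t Ht). apply continuity_pt_filterlim in Hc.
pose proof (proj1 (filterlim_locally _ _) Hc eps) as Hc0; clear Hc.
destruct Hc0 as [d Hd]. exists d. intros x Hx Hax.
specialize (Hd x Hx). simpl in *. rewrite (He x Hax), (He t Ht). exact Hd.
Qed.

Lemma cont_of_cont_on a h t : cont_on a h -> a < t -> continuity_pt h t.
Proof.
intros Hc Ht. apply continuity_pt_filterlim. apply filterlim_locally. intros eps.
specialize (Hc t (Rlt_le _ _ Ht)). pose proof (proj1 (filterlim_locally _ _) Hc) as Hc0; clear Hc; rename Hc0 into Hc.
destruct (Hc eps) as [d Hdd].
assert (Hp : 0 < Rmin d (t - a)) by (apply Rmin_pos; [apply cond_pos|lra]).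
exists (mkposreal _ Hp). cut (forall s : R, ball t (Rmin d (t - a)) s -> ball (h t) eps (h s)).
{ intro H; exact H. }
intros s Hs. apply ballR in Hs.
apply Hdd. apply ballR. eapply Rlt_le_trans; [exact Hs| apply Rmin_l].
assert (H2 : Rabs (s - t) < t - a) by (eapply Rlt_le_trans; [exact Hs| apply Rmin_r]).
destruct (Rabs_def2 _ _ H2); lra.
Qed.

Lemma C2_transfer a t0 h U U1 U2 : t0 < a ->
  (forall t, a <= t -> h t = U t) ->
  (forall t, t0 < t -> derivable_pt_lim U t (U1 t) /\ derivable_pt_lim U1 t (U2 t) /\ continuity_pt U2 t) ->
  C2_with a h U1 U2.
Proof.
intros Ha He Hd. split; [|split].
- apply (deriv_on_of _ _ U); auto. intros t Ht; apply Hd; lra.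
- apply (deriv_on_of _ _ U1); auto. intros t Ht; apply Hd; lra.
- apply (cont_on_of _ _ U2); auto. intros t Ht; apply Hd; lra.
Qed.

Lemma mono_lemma F F' a : (forall c, a <= c -> derivable_pt_lim F c (F' c)) ->
  (forall c, a <= c -> 0 <= F' c) -> forall s t, a <= s -> s <= t -> F s <= F t.
Proof.
intros Hd Hp s t Hs Hst. destruct (Rle_lt_or_eq_dec _ _ Hst) as [Hl|Heq].
- destruct (MVT_cor2 F F' s t Hl) as [c [Hc1 Hc2]].
  + intros c Hc; apply Hd; lra.
  + assert (0 <= F' c) by (apply Hp; lra). nra.
- subst; lra.
Qed.

Fixpoint U (g0 : R -> R) (n : nat) : R -> R :=
  match n with O => g0 | S m => fun t => exp (U g0 m t) end.
Fixpoint U1 (g0 g1 : R -> R) (n : nat) : R -> R :=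
  match n with O => g1 | S m => fun t => U g0 (S m) t * U1 g0 g1 m t end.
Fixpoint U2 (g0 g1 g2 : R -> R) (n : nat) : R -> R :=
  match n with O => g2 | S m => fun t =>
    U g0 (S m) t * (U1 g0 g1 m t * U1 g0 g1 m t + U2 g0 g1 g2 m t) end.

Lemma exp_iter_S n x : exp_iter (S n) x = exp (exp_iter n x).
Proof. revert x; induction n; intros x; [reflexivity|]. 
change (exp_iter (S n) (exp x) = exp (exp_iter (S n) x)). rewrite IHn. reflexivity. Qed.

Lemma exp_iter_U g0 n t : exp_iter n (g0 t) = U g0 n t.
Proof. induction n; [reflexivity|]. rewrite exp_iter_S, IHn. reflexivity. Qed.

Lemma U_deriv t0 g0 g1 g2 : C2_with t0 g0 g1 g2 -> forall n t, t0 < t ->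
  derivable_pt_lim (U g0 n) t (U1 g0 g1 n t) /\
  derivable_pt_lim (U1 g0 g1 n) t (U2 g0 g1 g2 n t) /\ continuity_pt (U2 g0 g1 g2 n) t.
Proof.
intros [Hd1 [Hd2 Hc]] n. induction n; intros t Ht.
- split; [|split].
  + exact (dpl_of_deriv_on _ _ _ _ Hd1 Ht).
  + exact (dpl_of_deriv_on _ _ _ _ Hd2 Ht).
  + exact (cont_of_cont_on _ _ _ Hc Ht).
- assert (HU : forall t, t0 < t -> derivable_pt_lim (U g0 (S n)) t (U1 g0 g1 (S n) t)).
  { intros s Hs. destruct (IHn s Hs) as [H1 _].
    pose proof (derivable_pt_lim_comp _ _ _ _ _ H1 (derivable_pt_lim_exp (U g0 n s))) as H.
    exact H. }
  destruct (IHn t Ht) as [H1 [H2 H3]].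
  assert (HcU : continuity_pt (U g0 (S n)) t).
  { apply derivable_continuous_pt. exists (U1 g0 g1 (S n) t). apply HU; auto. }
  assert (HcU1 : continuity_pt (U1 g0 g1 n) t).
  { apply derivable_continuous_pt. exists (U2 g0 g1 g2 n t). auto. }
  split; [|split].
  + apply HU; auto.
  + pose proof (derivable_pt_lim_mult (U g0 (S n)) (U1 g0 g1 n) _ _ _ (HU t Ht) H2) as H.
    replace (U2 g0 g1 g2 (S n) t) with
      (U1 g0 g1 (S n) t * U1 g0 g1 n t + U g0 (S n) t * U2 g0 g1 g2 n t).
    exact H. simpl. ring.
  + apply (continuity_pt_mult (U g0 (S n)) (fun t => U1 g0 g1 n t * U1 g0 g1 n t + U2 g0 g1 g2 n t)); auto.
    apply (continuity_pt_plus (fun t => U1 g0 g1 n t * U1 g0 g1 n t) (U2 g0 g1 g2 n)); auto.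
    apply (continuity_pt_mult (U1 g0 g1 n) (U1 g0 g1 n)); auto.
Qed.

Lemma g0_infty t0 g0 g1 g2 : C2_with t0 g0 g1 g2 ->
  is_lim (fun t => t * g1 t) p_infty p_infty -> is_lim g0 p_infty p_infty.
Proof.
intros HC Hl. pose proof (proj2 (is_lim_spec _ _ _) Hl 1) as [N1 HN1].
set (a := Rmax (t0 + 1) (Rmax (N1 + 1) 1)).
assert (Ha1 : t0 + 1 <= a) by apply Rmax_l.
assert (Ha2 : N1 + 1 <= a) by (eapply Rle_trans; [apply Rmax_l| apply Rmax_r]).
assert (Ha3 : 1 <= a) by (eapply Rle_trans; [apply Rmax_r| apply Rmax_r]).
assert (Hm := mono_lemma (fun t => g0 t - ln t) (fun t => g1 t - / t) a).
assert (Hm' : forall s t, a <= s -> s <= t -> g0 s - ln s <= g0 t - ln t).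
{ apply Hm.
  - intros c Hc. apply (derivable_pt_lim_minus g0 ln).
    + apply (proj1 (U_deriv t0 g0 g1 g2 HC 0 c ltac:(lra))).
    + apply derivable_pt_lim_ln. lra.
  - intros c Hc. assert (H1 := HN1 c ltac:(lra)).
    assert (Hc0 : 0 < c) by lra.
    assert (E : g1 c - / c = / c * (c * g1 c - 1)) by (field; lra).
    rewrite E. apply Rmult_le_pos. left; apply Rinv_0_lt_compat; lra. lra. }
apply is_lim_spec. intro M.
exists (Rmax a (exp (M - g0 a + ln a))). intros x Hx.
assert (Hxa : a < x) by (eapply Rle_lt_trans; [apply Rmax_l| exact Hx]).
assert (Hxe : exp (M - g0 a + ln a) < x) by (eapply Rle_lt_trans; [apply Rmax_r| exact Hx]).
assert (Hln : M - g0 a + ln a < ln x).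
{ rewrite <- (ln_exp (M - g0 a + ln a)) at 1. apply ln_increasing; auto. apply exp_pos. }
assert (H := Hm' a x (Rle_refl _) (Rlt_le _ _ Hxa)). lra.
Qed.

Lemma U_infty g0 n : is_lim g0 p_infty p_infty -> is_lim (U g0 n) p_infty p_infty.
Proof.
intros H; induction n; [exact H|].
apply (is_lim_comp exp (U g0 n) p_infty p_infty p_infty is_lim_exp_p IHn).
exists 0. intros x _ E. discriminate E.
Qed.

Lemma U1_pos g0 g1 n t : 0 < g1 t -> 0 < U1 g0 g1 n t.
Proof. intros H; induction n; [exact H|]. simpl. apply Rmult_lt_0_compat; [apply exp_pos|exact IHn]. Qed.

Lemma U_pos g0 n t : 0 < U g0 (S n) t.
Proof. apply exp_pos. Qed.

Lemma r_lim g0 g1 g2 n : is_lim (fun t => g2 t / (g1 t) ^ 2) p_infty 0 ->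
  is_lim g0 p_infty p_infty -> (exists A, forall t, A < t -> 0 < g1 t) ->
  is_lim (fun t => U2 g0 g1 g2 n t / (U1 g0 g1 n t) ^ 2) p_infty 0.
Proof.
intros Hr Hg [A HA]. induction n; [exact Hr|].
apply (is_lim_ext_loc (fun t => (1 + U2 g0 g1 g2 n t / (U1 g0 g1 n t) ^ 2) / U g0 (S n) t)).
- exists A. intros t Ht. assert (H1 := U1_pos g0 g1 n t (HA t Ht)).
  assert (H2 := U_pos g0 n t). simpl in *. field. lra.
- replace (Finite 0) with (Rbar_div (Finite (1 + 0)) p_infty) by (simpl; f_equal; ring).
  apply is_lim_div.
  + apply (is_lim_plus' (fun _ => 1)). apply is_lim_const. exact IHn.
  + apply U_infty; auto.
  + discriminate.
  + simpl. exact I.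
Qed.

Lemma tU1_lim g0 g1 n : is_lim (fun t => t * g1 t) p_infty p_infty ->
  is_lim g0 p_infty p_infty -> (exists A, forall t, A < t -> 0 < g1 t) ->
  is_lim (fun t => t * U1 g0 g1 n t) p_infty p_infty.
Proof.
intros Hl Hg [A HA]. induction n; [exact Hl|].
apply (is_lim_le_p_loc (fun t => t * U1 g0 g1 n t)); [|exact IHn].
pose proof (proj2 (is_lim_spec _ _ _) (U_infty g0 n Hg) 0) as [M HM].
exists (Rmax A (Rmax M 0)). intros x Hx.
assert (HxA : A < x) by (eapply Rle_lt_trans; [apply Rmax_l| exact Hx]).
assert (HxM : M < x) by (eapply Rle_lt_trans; [eapply Rle_trans; [apply Rmax_l|apply Rmax_r]| exact Hx]).
assert (Hx0 : 0 < x) by (eapply Rle_lt_trans; [eapply Rle_trans; [apply Rmax_r|apply Rmax_r]| exact Hx]).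
assert (H1 := U1_pos g0 g1 n x (HA x HxA)).
assert (HE : 1 < exp (U g0 n x)) by (rewrite <- exp_0; apply exp_increasing; apply HM; auto).
simpl. assert (0 < x * U1 g0 g1 n x) by (apply Rmult_lt_0_compat; auto).
nra.
Qed.

Lemma U_mono t0 g0 g1 g2 t1 n : C2_with t0 g0 g1 g2 -> t0 < t1 ->
  (forall t, t1 <= t -> 0 < g1 t) -> nondecr_on t1 (U g0 n).
Proof.
intros HC Ht Hp. induction n.
- intros s t Hs Hst. simpl.
  assert (H1 : forall c, t1 <= c -> derivable_pt_lim g0 c (g1 c)).
  { intros c Hc. apply (proj1 (U_deriv t0 g0 g1 g2 HC 0 c ltac:(lra))). }
  assert (H2 : forall c, t1 <= c -> 0 <= g1 c) by (intros c Hc; left; auto).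
  exact (mono_lemma g0 g1 t1 H1 H2 s t Hs Hst).
- intros s t Hs Hst. simpl. destruct (Rle_lt_or_eq_dec _ _ (IHn s t Hs Hst)) as [H|H].
  + left; apply exp_increasing; auto.
  + rewrite H; lra.
Qed.

Lemma tU1_mono t0 g0 g1 g2 t1 n : C2_with t0 g0 g1 g2 -> t0 < t1 -> 0 < t1 ->
  (forall t, t1 <= t -> 0 < g1 t) -> nondecr_on t0 (fun t => t * g1 t) ->
  nondecr_on t1 (fun t => t * U1 g0 g1 n t).
Proof.
intros HC Ht Ht1 Hp Hn. induction n.
- intros s t Hs Hst. apply Hn; lra.
- intros s t Hs Hst. simpl.
  assert (HU := U_mono t0 g0 g1 g2 t1 n HC Ht Hp s t Hs Hst).
  assert (HE : exp (U g0 n s) <= exp (U g0 n t)).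
  { destruct (Rle_lt_or_eq_dec _ _ HU) as [H|H]. left; apply exp_increasing; auto. rewrite H; lra. }
  assert (HA := IHn s t Hs Hst). simpl in HA.
  assert (H0 : 0 < s * U1 g0 g1 n s) by (apply Rmult_lt_0_compat; [lra| apply U1_pos, Hp; lra]).
  assert (H1 := exp_pos (U g0 n s)).
  replace (s * (exp (U g0 n s) * U1 g0 g1 n s)) with (exp (U g0 n s) * (s * U1 g0 g1 n s)) by ring.
  replace (t * (exp (U g0 n t) * U1 g0 g1 n t)) with (exp (U g0 n t) * (t * U1 g0 g1 n t)) by ring.
  apply Rmult_le_compat; lra.
Qed.

Theorem lemma2p11 (k : nat) (t0 : R) (g0 g0' g0'' f : R -> R) :
  (2 <= k)%nat -> 0 <= t0 ->
  C2_with t0 g0 g0' g0'' ->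
  is_lim (fun t => t * g0' t) p_infty p_infty ->
  is_lim (fun t => g0'' t / (g0' t) ^ 2) p_infty 0 ->
  nondecr_on t0 (fun t => t * g0' t) ->
  nonincr_on t0 (fun t => g0' t / g0 t) ->
  (forall t, 0 <= t -> 0 <= f t) ->
  C1_on 0 f ->
  (exists T, forall t, T <= t -> f t = exp_iter k (g0 t)) ->
  exists (t1 : R) (p : Rbar), H1 f t1 1 p.
Proof.
intros Hk Ht0 HC Hl Hr Hnd Hni _ _ [T HT].
destruct k as [|[|m]]; [lia|lia|].
pose proof (proj2 (is_lim_spec _ _ _) Hl 1) as [N1 HN1].
assert (Hpos : forall x, Rmax N1 0 < x -> 0 < g0' x).
{ intros x Hx. assert (N1 < x) by (eapply Rle_lt_trans; [apply Rmax_l|exact Hx]).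
  assert (0 < x) by (eapply Rle_lt_trans; [apply Rmax_r|exact Hx]).
  specialize (HN1 x H). destruct (Rlt_or_le 0 (g0' x)) as [h|h]; auto. nra. }
assert (Hg := g0_infty _ _ _ _ HC Hl).
assert (HA : exists A, forall t, A < t -> 0 < g0' t) by (exists (Rmax N1 0); auto).
assert (Hrm := r_lim g0 g0' g0'' m Hr Hg HA).
pose proof (proj2 (is_lim_spec _ _ _) Hrm (mkposreal (/2) ltac:(lra))) as [N3 HN3].
set (t1 := Rmax (t0 + 1) (Rmax T (Rmax (Rmax N1 0 + 1) (Rmax 1 (N3 + 1))))).
assert (F1 : t0 + 1 <= t1) by apply Rmax_l.
assert (F2 : T <= t1) by (unfold t1; eapply Rle_trans; [apply Rmax_l|apply Rmax_r]).
assert (F3 : Rmax N1 0 + 1 <= t1) by (unfold t1; eapply Rle_trans; [|apply Rmax_r];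
  eapply Rle_trans; [|apply Rmax_r]; apply Rmax_l).
assert (F4 : 1 <= t1) by (unfold t1; eapply Rle_trans; [|apply Rmax_r];
  eapply Rle_trans; [|apply Rmax_r]; eapply Rle_trans; [|apply Rmax_r]; apply Rmax_l).
assert (F5 : N3 + 1 <= t1) by (unfold t1; eapply Rle_trans; [|apply Rmax_r];
  eapply Rle_trans; [|apply Rmax_r]; eapply Rle_trans; [|apply Rmax_r]; apply Rmax_r).
clearbody t1.
assert (Hg1 : forall t, t1 <= t -> 0 < g0' t) by (intros t Ht; apply Hpos; lra).
assert (Ef : forall t, t1 <= t -> f t = U g0 (S (S m)) t).
{ intros t Ht. rewrite HT by lra. apply exp_iter_U. }
assert (El : forall t, t1 <= t -> ln (f t) = U g0 (S m) t).
{ intros t Ht. rewrite Ef by auto. simpl. apply ln_exp. }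
assert (HD := U_deriv t0 g0 g0' g0'' HC).
assert (Ht01 : t0 < t1) by lra.
assert (Hposr : forall t, t1 <= t -> 0 < U1 g0 g0' m t * U1 g0 g0' m t + U2 g0 g0' g0'' m t).
{ intros t Ht. assert (Hu := U1_pos g0 g0' m t (Hg1 t Ht)).
  assert (Hb0 := HN3 t ltac:(lra)).
  set (u := U1 g0 g0' m t) in *. set (v := U2 g0 g0' g0'' m t) in *.
  assert (Hb : Rabs (v / u ^ 2 - 0) < / 2) by exact Hb0.
  rewrite Rminus_0_r in Hb. apply Rabs_def2 in Hb. destruct Hb as [_ Hb].
  assert (E : v = (v / u ^ 2) * (u * u)) by (field; lra).
  rewrite E. set (r := v / u ^ 2) in *. assert (0 < u * u) by nra. nra. }
exists t1, p_infty. split; [|split].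
- intros t Ht. rewrite Ef by auto. apply exp_pos.
- exists (U1 g0 g0' (S (S m))), (U2 g0 g0' g0'' (S (S m))).
  apply (C2_transfer _ t0 _ (U g0 (S (S m)))); auto.
- exists (U1 g0 g0' (S m)), (U2 g0 g0' g0'' (S m)). split; [|split; [|split; [|split; [|split]]]].
  + apply (C2_transfer _ t0 _ (U g0 (S m))); auto.
  + intros t Ht. split. apply U1_pos; auto.
    simpl. apply Rmult_lt_0_compat. apply exp_pos. auto.
  + left. split; [reflexivity|exact I].
  + apply (is_lim_ext_loc (fun t => / (1 + U2 g0 g0' g0'' m t / (U1 g0 g0' m t) ^ 2))).
    * exists t1. intros t Ht. rewrite El by lra.
      assert (Hu := U1_pos g0 g0' m t (Hg1 t ltac:(lra))).
      assert (Hp := Hposr t ltac:(lra)).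
      assert (He := exp_pos (U g0 m t)). simpl. field. split; [|split]; lra.
    * replace (Finite 1) with (Rbar_inv (Finite (1 + 0))) by (simpl; f_equal; field).
      apply is_lim_inv.
      -- apply (is_lim_plus' (fun _ => 1)). apply is_lim_const. exact Hrm.
      -- simpl. intro Z. injection Z. lra.
  + apply (is_lim_ext_loc (fun t => t * U1 g0 g0' m t)).
    * exists t1. intros t Ht. rewrite El by lra.
      assert (He := exp_pos (U g0 m t)). simpl. field. lra.
    * apply tU1_lim; auto.
  + intros _. split.
    * intros s t Hs Hst.
      assert (E : forall t, t1 <= t -> t * U1 g0 g0' (S m) t / ln (f t) = t * U1 g0 g0' m t).
      { intros x Hx. rewrite El by lra. assert (He := exp_pos (U g0 m x)). simpl. field. lra. }
      rewrite !E by lra. apply (tU1_mono t0 g0 g0' g0'' t1 m); auto; lra.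
    * exists (S (S m)), g0, g0', g0''. split; [lia|split; [|split]].
      -- apply (C2_transfer _ t0 _ (U g0 0)); auto.
      -- intros t Ht. apply HT. lra.
      -- intros s t Hs Hst. apply Hni; lra.
Qed.
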